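(* Let $G$ be a finite group, let $\alpha$ be an automorphism of $G$, and let $r>1$ and $s>1$ be coprime integers. For $x\in G$ and a positive integer $d$ put $N_d(x)=x\,\alpha(x)\,\alpha^2(x)\cdots\alpha^{d-1}(x)$. For a positive integer $m$ and $u,v\in G$, write $u\approx_m v$ if there is $z\in G$ with $v=z^{-1}u\,\alpha^m(z)$. Suppose $x,y\in G$ satisfy $N_r(x)\approx_r N_r(y)$ and $N_s(x)\approx_s N_s(y)$, but $N_d(x)\not\approx_d N_d(y)$ for every proper divisor $d$ of $r$ and every proper divisor $d$ of $s$. Then $|G|$ is divisible by $rs$ and $|G|\neq rs$. Furthermore, if $rs\equiv 2\pmod 4$, then $|G|$ is divisible by $2rs$.
   Context: A proper divisor of a positive integer $n$ is a positive divisor of $n$ strictly less than $n$ (so $1$ is a proper divisor of every $n>1$). The relation $\approx_m$ is the equivalence relation describing cohomologous cocycles in $H^1(\hat{\mathbb{Z}},G)$ when $1\in\hat{\mathbb{Z}}$ acts on $G$ via $\alpha^m$, cocycles being identified with their value at $1$. *)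

(* Defs.v *)
From mathcomp Require Import all_boot all_fingroup.
Set Implicit Arguments. Unset Strict Implicit. Unset Printing Implicit Defensive.
Local Open Scope group_scope.

Definition normN (gT : finGroupType) (alpha : gT -> gT) (d : nat) (x : gT) : gT :=
  \prod_(i < d) iter i alpha x.

Definition twisted_conj (gT : finGroupType) (alpha : gT -> gT) (m : nat) (u v : gT) : Prop :=
  exists z : gT, v = z^-1 * u * iter m alpha z.

(* Main.v *)
Require Import Defs.
From mathcomp Require Import all_boot all_fingroup all_solvable.
From mathcomp Require Import zify.
Set Implicit Arguments. Unset Strict Implicit. Unset Printing Implicit Defensive.
Local Open Scope group_scope.

Lemma amul (gT : finGroupType) (a : {perm gT}) (Ha : a \in Aut [set: gT]) u v :
  a (u * v) = a u * a v.
Proof. by move/Aut_morphic/morphicP: Ha => H; apply: H; rewrite inE. Qed.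

Lemma iter_amul (gT : finGroupType) (a : {perm gT}) (Ha : a \in Aut [set: gT]) k u v :
  iter k a (u * v) = iter k a u * iter k a v.
Proof. by elim: k => //= k IH; rewrite IH amul. Qed.

Lemma iter_a1 (gT : finGroupType) (a : {perm gT}) (Ha : a \in Aut [set: gT]) k :
  iter k a 1 = 1.
Proof. by apply: (mulgI (iter k a 1)); rewrite -iter_amul // !mulg1. Qed.

Lemma iter_aV (gT : finGroupType) (a : {perm gT}) (Ha : a \in Aut [set: gT]) k z :
  iter k a z^-1 = (iter k a z)^-1.
Proof. by apply: (mulIg (iter k a z)); rewrite -iter_amul // !mulVg iter_a1. Qed.

Lemma aV (gT : finGroupType) (a : {perm gT}) (Ha : a \in Aut [set: gT]) z :
  a z^-1 = (a z)^-1.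
Proof. exact: (iter_aV Ha 1). Qed.

Lemma normN0 (gT : finGroupType) (a : gT -> gT) x : normN a 0 x = 1.
Proof. by rewrite /normN big_ord0. Qed.

Lemma normNS (gT : finGroupType) (a : {perm gT}) (Ha : a \in Aut [set: gT]) n x :
  normN a n.+1 x = x * a (normN a n x).
Proof.
rewrite /normN big_ord_recl /=; congr (_ * _).
rewrite (big_morph a (amul Ha) (iter_a1 Ha 1)).
by apply: eq_bigr => i _.
Qed.

Definition ff (gT : finGroupType) (a : {perm gT}) (x y z : gT) := x * a z * y^-1.

Lemma ff_inj (gT : finGroupType) (a : {perm gT}) x y : injective (ff a x y).
Proof. by move=> u v; rewrite /ff => /mulIg /mulgI /perm_inj. Qed.
Arguments ff_inj {gT} a x y.

Lemma iter_ff (gT : finGroupType) (a : {perm gT}) (Ha : a \in Aut [set: gT]) x y k z :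
  iter k (ff a x y) z = normN a k x * iter k a z * (normN a k y)^-1.
Proof.
elim: k => [|k IH]; first by rewrite !normN0 /= mul1g invg1 mulg1.
rewrite iterS IH /ff !normNS // !(amul Ha) (aV Ha) invMg !mulgA.
by [].

Qed.
Definition TT (gT : finGroupType) (b : gT -> gT) (u v : gT) :=
  [set z | z^-1 * u * b z == v].

Lemma HH_group (gT : finGroupType) (b : gT -> gT)
  (bM : forall u v, b (u * v) = b u * b v) (b1 : b 1 = 1) u :
  group_set (TT b u u).
Proof.
apply/group_setP; split; first by rewrite inE invg1 mul1g b1 mulg1.
move=> z w; rewrite !inE => /eqP Hz /eqP Hw.
by rewrite invMg bM !mulgA -(mulgA _ z^-1) -(mulgA _ _ (b z)) Hz Hw.
Qed.

Lemma conj_eq (gT : finGroupType) (c d a b : gT) :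
  (c * a * d == c * b * d) = (a == b).
Proof. by apply/eqP/eqP=> [/mulIg/mulgI|->]. Qed.

Lemma TT_coset (gT : finGroupType) (b : gT -> gT)
  (bM : forall u v, b (u * v) = b u * b v) (b1 : b 1 = 1) u v z0 :
  z0 \in TT b u v -> TT b u v = TT b u u :* z0.
Proof.
have bV w : b w^-1 = (b w)^-1.
  by apply: (mulIg (b w)); rewrite -bM !mulVg b1.
rewrite inE => /eqP H0; apply/setP => z; rewrite mem_rcoset !inE.
rewrite invMg invgK bM bV.
have -> : z0 * z^-1 * u * (b z * (b z0)^-1) = z0 * (z^-1 * u * b z) * (b z0)^-1
  by rewrite !mulgA.
set A := z^-1 * u * b z.
have -> : (z0 * A * (b z0)^-1 == u) = (z0 * A * (b z0)^-1 == z0 * v * (b z0)^-1)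
  by rewrite -H0 !mulgA mulgK mulgV mul1g.
by rewrite conj_eq.
Qed.

Lemma iter_dvd (T : finType) (f : T -> T) (injf : injective f) n z :
  iter n f z = z -> fingraph.order f z %| n.
Proof.
move=> H; set o := fingraph.order f z.
have Hk k : iter (k * o) f z = z.
  by elim: k => // k IH; rewrite mulSn iterD IH iter_order.
move: H; rewrite {1}(divn_eq n o) addnC iterD Hk => H.
have lt : n %% o < o by rewrite ltn_pmod // fingraph.order_gt0.
have := findex_iter lt; rewrite H findex0 => E.
by rewrite /dvdn E.
Qed.

Lemma fclosedP (T : finType) (f : T -> T) (injf : injective f) (A : {set T}) :
  (forall z, z \in A -> f z \in A) -> fclosed f A.
Proof.
move=> HA; have It k z : z \in A -> iter k f z \in A.
  by elim: k => //= k IH /IH /HA.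
move=> u v /eqP <-; apply/idP/idP; first exact: HA.
move=> Hfu; rewrite -(iter_order injf u) -fingraph.orderSpred iterSr; exact: It.
Qed.

Lemma fixTT (gT : finGroupType) (a : {perm gT}) (Ha : a \in Aut [set: gT]) x y k z :
  (iter k (ff a x y) z == z) =
  (z \in TT (iter k a) (normN a k x) (normN a k y)).
Proof.
rewrite iter_ff // inE -(conj_eq z^-1 (normN a k y)) mulVg mul1g !mulgA mulgKV.
by [].
Qed.

Lemma order_r (gT : finGroupType) (a : {perm gT}) (Ha : a \in Aut [set: gT]) x y r z :
  0 < r ->
  (forall d, 0 < d -> d < r -> d %| r ->
     ~ twisted_conj a d (normN a d x) (normN a d y)) ->
  z \in TT (iter r a) (normN a r x) (normN a r y) ->
  fingraph.order (ff a x y) z = r.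
Proof.
move=> r0 Hd Hz; set o := fingraph.order _ z.
have odvd : o %| r by apply: (iter_dvd (ff_inj a x y)); apply/eqP; rewrite fixTT.
have Ho : z \in TT (iter o a) (normN a o x) (normN a o y).
  by rewrite -fixTT //; apply/eqP/iter_order/ff_inj.
have o0 : 0 < o by apply: fingraph.order_gt0.
have [lt|ge] := ltnP o r.
  exfalso; apply: (Hd o o0 lt odvd); exists z.
  by move: Ho; rewrite inE => /eqP ->.
by apply/eqP; rewrite eqn_leq ge dvdn_leq.
Qed.

Lemma r_dvd_T (gT : finGroupType) (a : {perm gT}) (Ha : a \in Aut [set: gT]) x y r
  (A : {set gT}) :
  0 < r ->
  (forall d, 0 < d -> d < r -> d %| r ->
     ~ twisted_conj a d (normN a d x) (normN a d y)) ->
  A \subset TT (iter r a) (normN a r x) (normN a r y) ->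
  (forall z, z \in A -> ff a x y z \in A) ->
  r %| #|A|.
Proof.
move=> r0 Hd sA clA.
rewrite -(fcard_order_set (ff_inj a x y) (n:=r) (a:=mem A)); first exact: dvdn_mull.
  apply/subsetP => z zA; rewrite inE; apply/eqP.
  by apply: (order_r Ha r0 Hd); apply: (subsetP sA).
exact: fclosedP (ff_inj a x y) A clA.
Qed.

Lemma ffT (gT : finGroupType) (a : {perm gT}) (Ha : a \in Aut [set: gT]) x y r z :
  z \in TT (iter r a) (normN a r x) (normN a r y) ->
  ff a x y z \in TT (iter r a) (normN a r x) (normN a r y).
Proof. by rewrite -!fixTT // -iterSr iterS => /eqP ->. Qed.

Lemma TTn (gT : finGroupType) (a : {perm gT}) r x y :
  twisted_conj a r (normN a r x) (normN a r y) ->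
  exists z0, z0 \in TT (iter r a) (normN a r x) (normN a r y).
Proof. by case=> z E; exists z; rewrite inE E. Qed.

Lemma r_dvd_H (gT : finGroupType) (a : {perm gT}) (Ha : a \in Aut [set: gT]) x y r :
  0 < r ->
  twisted_conj a r (normN a r x) (normN a r y) ->
  (forall d, 0 < d -> d < r -> d %| r ->
     ~ twisted_conj a d (normN a d x) (normN a d y)) ->
  r %| #|TT (iter r a) (normN a r x) (normN a r x)|.
Proof.
move=> r0 /TTn [z0 Hz0] Hd.
rewrite -(card_rcoset _ z0) -(TT_coset (iter_amul Ha r) (iter_a1 Ha r) Hz0).
apply: (r_dvd_T Ha r0 Hd) => //; exact: ffT.
Qed.

Lemma r_dvd_G (gT : finGroupType) (a : {perm gT}) (Ha : a \in Aut [set: gT]) x y r :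
  0 < r ->
  twisted_conj a r (normN a r x) (normN a r y) ->
  (forall d, 0 < d -> d < r -> d %| r ->
     ~ twisted_conj a d (normN a d x) (normN a d y)) ->
  r %| #|gT|.
Proof.
move=> r0 Hc Hd; apply: dvdn_trans (r_dvd_H Ha r0 Hc Hd) _.
pose HG := Group (HH_group (iter_amul Ha r) (iter_a1 Ha r) (normN a r x)).
have := cardSg (subsetT HG); rewrite cardsT; exact.
Qed.

Lemma TT_rs (gT : finGroupType) (a : {perm gT}) (Ha : a \in Aut [set: gT]) x y r s u :
  1 < r -> coprime r s ->
  (forall d, 0 < d -> d < r -> d %| r ->
     ~ twisted_conj a d (normN a d x) (normN a d y)) ->
  u \in TT (iter r a) (normN a r x) (normN a r y) ->
  u \in TT (iter s a) (normN a s x) (normN a s y) -> False.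
Proof.
move=> r1 cop Hd Hr Hs.
have o1 : fingraph.order (ff a x y) u %| 1.
  rewrite -(eqP cop) dvdn_gcd.
  by rewrite !(iter_dvd (ff_inj a x y)) //; apply/eqP; rewrite fixTT.
have : u \in TT (iter 1 a) (normN a 1 x) (normN a 1 y).
  rewrite -fixTT //; move: o1; rewrite dvdn1 => /eqP <-.
  by apply/eqP/iter_order/ff_inj.
rewrite inE => /eqP E; by apply: (Hd 1%N isT r1 (dvd1n r)); exists u; rewrite E.
Qed.

Lemma part2 (gT : finGroupType) (a : {perm gT}) (Ha : a \in Aut [set: gT]) x y r s :
  1 < r -> 1 < s -> coprime r s ->
  twisted_conj a r (normN a r x) (normN a r y) ->
  twisted_conj a s (normN a s x) (normN a s y) ->
  (forall d, 0 < d -> d < r -> d %| r ->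
     ~ twisted_conj a d (normN a d x) (normN a d y)) ->
  (forall d, 0 < d -> d < s -> d %| s ->
     ~ twisted_conj a d (normN a d x) (normN a d y)) ->
  #|gT| <> (r * s)%N.
Proof.
move=> r1 s1 cop Hcr Hcs Hdr Hds Hcard.
have r0 : 0 < r by apply: ltnW.
have s0 : 0 < s by apply: ltnW.
pose Hr := Group (HH_group (iter_amul Ha r) (iter_a1 Ha r) (normN a r x)).
pose Hs := Group (HH_group (iter_amul Ha s) (iter_a1 Ha s) (normN a s x)).
have rHr : r %| #|Hr| := r_dvd_H Ha r0 Hcr Hdr.
have sHs : s %| #|Hs| := r_dvd_H Ha s0 Hcs Hds.
have [z0 Hz0] := TTn Hcr.
have [z1 Hz1] := TTn Hcs.
set Tr := TT (iter r a) _ _ in Hz0.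
set Ts := TT (iter s a) _ _ in Hz1.
have eTr : Tr = Hr :* z0 := TT_coset (iter_amul Ha r) (iter_a1 Ha r) Hz0.
have eTs : Ts = Hs :* z1 := TT_coset (iter_amul Ha s) (iter_a1 Ha s) Hz1.
pose X := (Hr * Hs) :* z1.
have XTr : X \subset ~: Tr.
  apply/subsetP => v; rewrite mem_rcoset => /mulsgP [w u wH uH E].
  rewrite inE; apply/negP => vTr.
  have uTs : u * z1 \in Ts by rewrite eTs mem_rcoset mulgK.
  apply: (TT_rs Ha r1 cop Hdr _ uTs).
  move: vTr; rewrite eTr !mem_rcoset => vH.
  change (u * z1 \in Tr); rewrite eTr mem_rcoset.
  have Eu : u * z1 = w^-1 * v by rewrite -(mulKg w u) -E !mulgA mulgKV.
  have -> : u * z1 * z0^-1 = w^-1 * (v * z0^-1) by rewrite Eu mulgA.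
  by rewrite groupM ?groupV.
have cX : #|X| < #|gT|.
  have := subset_leq_card XTr; rewrite -(cardsC Tr).
  have : 0 < #|Tr| by apply/card_gt0P; exists z0.
  move=> h1 h2; by rewrite -add1n; apply: leq_add.
have dX : (r * s)%N %| #|X|.
  rewrite card_rcoset Gauss_dvd //.
  have E := mul_cardG Hr Hs.
  have F0 : 0 < #|Hr :&: Hs| by apply/card_gt0P; exists 1; rewrite group1.
  have [k Ek] : exists k, #|Hs| = (k * #|Hr :&: Hs|)%N.
    by apply/dvdnP; apply: cardSg; apply: subsetIr.
  have [l El] : exists l, #|Hr| = (l * #|Hr :&: Hs|)%N.
    by apply/dvdnP; apply: cardSg; apply: subsetIl.
  apply/andP; split.
    have : #|Hr * Hs| = (#|Hr| * k)%N.
      apply/eqP; rewrite -(eqn_pmul2r F0) -E Ek mulnA //.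
    by move=> ->; apply: dvdn_mulr.
  have : #|Hr * Hs| = (#|Hs| * l)%N.
    apply/eqP; rewrite -(eqn_pmul2r F0) -E El; apply/eqP; nia.
  by move=> ->; apply: dvdn_mulr.
have X0 : 0 < #|X|.
  by apply/card_gt0P; exists (1 * 1 * z1); rewrite mem_rcoset mulgK mem_mulg.
have := dvdn_leq X0 dX; rewrite -Hcard => h.
by move: (leq_ltn_trans h cX); rewrite ltnn.
Qed.

Definition lam (gT : finGroupType) (g : gT) : {perm gT} := perm (mulgI g).
Definition chi (gT : finGroupType) (g : gT) := odd_perm (lam g).

Lemma chiM (gT : finGroupType) (u v : gT) : chi (u * v) = chi u (+) chi v.
Proof.
rewrite /chi.
have -> : lam (u * v) = lam v * lam u by apply/permP => w; rewrite permM !permE mulgA.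
by rewrite odd_permM addbC.
Qed.

Lemma chi1 (gT : finGroupType) : chi (1 : gT) = false.
Proof.
rewrite /chi.
have -> : lam (1 : gT) = 1 by apply/permP => w; rewrite perm1 permE mul1g.
exact: odd_perm1.
Qed.

Lemma chiV (gT : finGroupType) (u : gT) : chi u^-1 = chi u.
Proof. by have := chiM u^-1 u; rewrite mulVg chi1; case: (chi u); case: (chi _). Qed.

Lemma chiA (gT : finGroupType) (a : {perm gT}) (Ha : a \in Aut [set: gT]) u :
  chi (a u) = chi u.
Proof.
rewrite /chi.
have -> : lam (a u) = lam u ^ a.
  apply/permP => w; rewrite conjgE !permM !permE.
  by rewrite amul // f_iinv.
exact: odd_permJ.
Qed.

Lemma chi_iter (gT : finGroupType) (a : {perm gT}) (Ha : a \in Aut [set: gT]) k u :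
  chi (iter k a u) = chi u.
Proof. by elim: k => //= k IH; rewrite chiA. Qed.

Lemma chi_normN (gT : finGroupType) (a : {perm gT}) (Ha : a \in Aut [set: gT]) k x :
  chi (normN a k x) = odd k && chi x.
Proof.
elim: k => [|k IH]; first by rewrite normN0 chi1.
rewrite normNS // chiM chiA // IH /=.
by case: (odd k); case: (chi x).
Qed.

Lemma lamX (gT : finGroupType) (t w : gT) i : (lam t ^+ i) w = t ^+ i * w.
Proof.
rewrite permX; elim: i => [|i IH]; first by rewrite expg0 mul1g.
by rewrite iterS IH permE expgS mulgA.
Qed.

Lemma porbit_lam (gT : finGroupType) (t w : gT) : #[t] = 2 ->
  porbit (lam t) w = [set w; t * w].
Proof.
move=> ot; apply/setP => v; apply/porbitP/set2P.
  case=> i ->; rewrite lamX -expg_mod_order ot.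
  have : i %% 2 < 2 by rewrite ltn_mod.
  case: (i %% 2) => [|[|//]] _; first by left; rewrite expg0 mul1g.
  by right; rewrite expg1.
case=> ->; first by exists 0; rewrite lamX expg0 mul1g.
by exists 1%N; rewrite lamX expg1.
Qed.

Lemma partition_porbits (T : finType) (s : {perm T}) :
  partition (porbits s) [set: T].
Proof.
apply/and3P; split.
- apply/eqP/setP => v; rewrite inE; apply/bigcupP.
  by exists (porbit s v); [apply: imset_f | apply: porbit_id].
- apply/trivIsetP => A B /imsetP [a _ ->] /imsetP [b _ ->] neq.
  rewrite -setI_eq0; apply/eqP/setP => v; rewrite !inE.
  apply/negbTE/negP => /andP [va vb]; move/negP: neq; apply.
  by rewrite -(eqP (_ : porbit s v == porbit s a)) ?eq_porbit_mem // eq_porbit_mem.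
- apply/imsetP => [[v _ E]].
  by have := porbit_id s v; rewrite -E inE.
Qed.

Lemma chi_inv2 (gT : finGroupType) (t : gT) : #[t] = 2 -> ~~ (4 %| #|gT|) ->
  chi t = true.
Proof.
move=> ot n4.
have t1 : t != 1 by apply/eqP => E; move: ot; rewrite E order1.
have cG : #|gT| = (#|porbits (lam t)| * 2)%N.
  rewrite -cardsT (card_partition (partition_porbits (lam t))) -sum_nat_const.
  apply: eq_bigr => A /imsetP [w _ ->]; rewrite porbit_lam // cards2.
  suff : w != t * w by move=> ->.
  apply/eqP => E; move/eqP: t1; apply; apply: (mulIg w); by rewrite mul1g -E.
rewrite /chi /odd_perm cG oddM /= andbF.
set P := #|porbits _|.
case E: (odd P) => //.
have : 2 %| P by rewrite dvdn2 E.
move: n4; rewrite cG; lia.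
Qed.

Lemma kerchi_group (gT : finGroupType) : group_set [set z : gT | ~~ chi z].
Proof.
apply/group_setP; split; first by rewrite inE chi1.
by move=> u v; rewrite !inE chiM => /negbTE -> /negbTE ->.
Qed.

Lemma part3 (gT : finGroupType) (a : {perm gT}) (Ha : a \in Aut [set: gT]) x y r s :
  0 < r -> 2 %| r -> odd s ->
  twisted_conj a r (normN a r x) (normN a r y) ->
  twisted_conj a s (normN a s x) (normN a s y) ->
  (forall d, 0 < d -> d < r -> d %| r ->
     ~ twisted_conj a d (normN a d x) (normN a d y)) ->
  4 %| #|gT|.
Proof.
move=> r0 r2 so Hcr Hcs Hd; case/boolP: (4 %| #|gT|) => // n4; exfalso.
have hxy : chi x = chi y.
  case: Hcs => z1 E; have := congr1 (@chi gT) E.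
  rewrite !chiM chiV chi_iter // !chi_normN // so /= => ->.
  by case: (chi z1); case: (chi x).
pose NG := Group (@kerchi_group gT).
have NGodd : ~~ (2 %| #|NG|).
  apply/negP => /(Cauchy (isT : prime 2)) [t tN ot].
  by move: tN; rewrite inE chi_inv2.
pose Hr := Group (HH_group (iter_amul Ha r) (iter_a1 Ha r) (normN a r x)).
have rHr : r %| #|Hr| := r_dvd_H Ha r0 Hcr Hd.
have [t tH ot] := Cauchy (isT : prime 2) (dvdn_trans r2 rHr).
have cht := chi_inv2 ot n4.
have [z0 Hz0] := TTn Hcr.
set Tr := TT (iter r a) _ _ in Hz0.
have eTr : Tr = Hr :* z0 := TT_coset (iter_amul Ha r) (iter_a1 Ha r) Hz0.
pose z2 := if chi z0 then t * z0 else z0.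
have z2T : z2 \in Tr.
  rewrite /z2; case: (chi z0) => //.
  by rewrite eTr mem_rcoset mulgK.
have z2N : chi z2 = false.
  by rewrite /z2; case E: (chi z0); rewrite ?chiM ?E ?cht.
have eTr2 : Tr = Hr :* z2 := TT_coset (iter_amul Ha r) (iter_a1 Ha r) z2T.
pose A := Tr :&: NG.
have eA : A = (Hr :&: NG) :* z2.
  apply/setP => z; rewrite /A inE {1}eTr2 !mem_rcoset inE [in RHS]inE.
  by rewrite !inE chiM chiV z2N addbF.
have rA : r %| #|A|.
  apply: (r_dvd_T Ha r0 Hd); first exact: subsetIl.
  move=> z; rewrite inE => /andP [zT zN]; rewrite /A inE; apply/andP; split; first exact: ffT.
  move: zN; rewrite !inE.
  by rewrite /ff !chiM chiV chiA // hxy; case: (chi z); case: (chi y).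
have : ~~ (2 %| #|A|).
  rewrite eA card_rcoset; apply: contra NGodd => h2.
  apply: dvdn_trans h2 _; apply: cardSg; exact: subsetIr.
by rewrite (dvdn_trans r2 rA).
Qed.

Lemma arith_final (m n : nat) : m %% 4 = 2 -> m %| n -> 4 %| n -> 2 * m %| n.
Proof.
move=> m4 mn fn.
have Em := divn_eq m 4; rewrite m4 in Em.
set q := m %/ 4 in Em.
have E2 : (2 * m = 4 * (2 * q + 1))%N by lia.
have cop : coprime 4 (2 * q + 1).
  by rewrite (_ : 4 = 2 ^ 2)%N // coprimeXl // coprime2n addn1 /= oddM.
rewrite E2 Gauss_dvd // fn /=.
apply: dvdn_trans mn; rewrite Em (_ : (q * 4 + 2 = 2 * (2 * q + 1))%N); last by lia.
exact: dvdn_mull.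
Qed.

Theorem theorem6p1 (gT : finGroupType) (alpha : {perm gT})
  (Halpha : alpha \in Aut [set: gT]) (r s : nat) (x y : gT) :
  1 < r -> 1 < s -> coprime r s ->
  twisted_conj alpha r (normN alpha r x) (normN alpha r y) ->
  twisted_conj alpha s (normN alpha s x) (normN alpha s y) ->
  (forall d, 0 < d -> d < r -> d %| r ->
     ~ twisted_conj alpha d (normN alpha d x) (normN alpha d y)) ->
  (forall d, 0 < d -> d < s -> d %| s ->
     ~ twisted_conj alpha d (normN alpha d x) (normN alpha d y)) ->
  (r * s %| #|gT|)%N /\ #|gT| <> (r * s)%N /\
  ((r * s) %% 4 = 2 -> (2 * (r * s)) %| #|gT|)%N.
Proof.
move=> r1 s1 cop Hcr Hcs Hdr Hds.
have r0 : 0 < r by apply: ltnW.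
have s0 : 0 < s by apply: ltnW.
have dG : (r * s %| #|gT|)%N.
  by rewrite Gauss_dvd // (r_dvd_G Halpha r0 Hcr Hdr) (r_dvd_G Halpha s0 Hcs Hds).
split=> //; split; first exact: (part2 Halpha r1 s1 cop Hcr Hcs Hdr Hds).
move=> m4; apply: arith_final => //.
have ev : 2 %| (r * s)%N.
  by rewrite (divn_eq (r * s) 4) m4 dvdn_add // dvdn_mull.
case/boolP: (2 %| r) => r2.
  have so : odd s.
    case E: (odd s) => //; exfalso.
    have : 2 %| gcdn r s by rewrite dvdn_gcd r2 dvdn2 E.
    by rewrite (eqP cop).
  exact: (part3 Halpha r0 r2 so Hcr Hcs Hdr).
have s2 : 2 %| s by move: ev; rewrite Euclid_dvdM // (negbTE r2).
have ro : odd r by move: r2; rewrite dvdn2 negbK.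
exact: (part3 Halpha s0 s2 ro Hcs Hcr Hds).
Qed.
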